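(* Let $b:\mathbb R\to\mathbb R$ be a function (bottom topography). Let $\rho,p,u,x,\check B$ be grid functions satisfying the scheme (M) at every node, where either $b$ is constant and $\check B\equiv0$, or $u+\check u\neq0$ at every node and $$\check B=\frac{b(\hat x)-b(\check x)}{\tau\,(u+\check u)}.$$ Then at every node the discrete energy conservation law $$\Big(\frac{u^2}{2}+\frac{p}{2\sqrt p-\rho}+\frac{\alpha^2(2\sqrt p-\rho)}{2p\rho}-\frac{b(\hat x)+b(x)}{2}\Big)_{\check t}+\Big(\frac{u^++\check u^+}{2}\,Q\Big)_{\bar s}=0$$ holds.
   Context: Fix mesh steps $\tau>0$, $h>0$ and a constant $\alpha\in\mathbb R$. A grid function is a real-valued function $f=f(t,s)$ on the uniform orthogonal mesh $\{(n\tau,kh): n,k\in\mathbb Z\}$. Shifts: $\hat f=f(t+\tau,s)$, $\check f=f(t-\tau,s)$, $f^+=f_+=f(t,s+h)$, $f^-=f_-=f(t,s-h)$; a shift applied to a composite expression shifts the whole expression (e.g. $\check u_s$ is $u_s$ at $(t-\tau,s)$, $\check u^+$ is $u$ at $(t-\tau,s+h)$). Differences: $f_t=(\hat f-f)/\tau$, $f_{\check t}=(f-\check f)/\tau$, $f_s=(f_+-f)/h$, $f_{\bar s}=(f-f_-)/h$. Let $\rho>0$, $p>0$, $u$, $x$, $\check B$ be grid functions, and set $$Q=\Big(\frac{4}{\rho\check\rho}-\frac{2}{\sqrt p}\Big(\frac1\rho+\frac1{\check\rho}\Big)+\frac1p\Big)^{-1}-\frac{\alpha^2}{\sqrt p}$$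 (the bracket being assumed nonzero). The scheme (M) (shallow water MHD in mass Lagrangian coordinates) is the requirement that at every node $$\rho_{\check t}+\tfrac12\rho\check\rho\,(u_s+\check u_s)=0,\quad u_{\check t}+Q_{\bar s}-\check B=0,\quad x_t=u,\quad \check x_s+x_s=\frac{1}{\sqrt{\check p}}+\frac1{\sqrt p}=\frac{2}{\check\rho}.$$ *)

(* Defs.v *)
From Stdlib Require Import Reals ZArith.
Open Scope R_scope.

(* A grid function: f n k is the value at the node (n*tau, k*h). *)
Definition grid := Z -> Z -> R.

Definition hat (f : grid) : grid := fun n k => f (n + 1)%Z k.
Definition chk (f : grid) : grid := fun n k => f (n - 1)%Z k.
Definition splus (f : grid) : grid := fun n k => f n (k + 1)%Z.
Definition sminus (f : grid) : grid := fun n k => f n (k - 1)%Z.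

Definition d_t (tau : R) (f : grid) : grid := fun n k => (hat f n k - f n k) / tau.
Definition d_tb (tau : R) (f : grid) : grid := fun n k => (f n k - chk f n k) / tau.
Definition d_s (h : R) (f : grid) : grid := fun n k => (splus f n k - f n k) / h.
Definition d_sb (h : R) (f : grid) : grid := fun n k => (f n k - sminus f n k) / h.

Definition Qbr (rho p : grid) : grid := fun n k =>
  4 / (rho n k * chk rho n k)
  - 2 / sqrt (p n k) * (1 / rho n k + 1 / chk rho n k)
  + 1 / p n k.

Definition Qf (alpha : R) (rho p : grid) : grid := fun n k =>
  / Qbr rho p n k - alpha ^ 2 / sqrt (p n k).

(* The scheme (M), at every node; Bc stands for the grid function \check B. *)
Definition schemeM (tau h alpha : R) (rho p u x Bc : grid) : Prop :=
  forall n k : Z,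
    d_tb tau rho n k
      + 1 / 2 * rho n k * chk rho n k * (d_s h u n k + chk (d_s h u) n k) = 0
    /\ d_tb tau u n k + d_sb h (Qf alpha rho p) n k - Bc n k = 0
    /\ d_t tau x n k = u n k
    /\ chk (d_s h x) n k + d_s h x n k = 1 / sqrt (chk p n k) + 1 / sqrt (p n k)
    /\ 1 / sqrt (chk p n k) + 1 / sqrt (p n k) = 2 / chk rho n k.

Definition energy (alpha : R) (b : R -> R) (rho p u x : grid) : grid := fun n k =>
  u n k ^ 2 / 2 + p n k / (2 * sqrt (p n k) - rho n k)
  + alpha ^ 2 * (2 * sqrt (p n k) - rho n k) / (2 * p n k * rho n k)
  - (b (hat x n k) + b (x n k)) / 2.

Definition eflux (alpha : R) (rho p u : grid) : grid := fun n k =>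
  (splus u n k + chk (splus u) n k) / 2 * Qf alpha rho p n k.

(* Main.v *)
Require Import Defs.
From Stdlib Require Import Reals ZArith Lra Field.
Open Scope R_scope.

Lemma key (a c d P P0 R R0 al : R) : 0<a -> 0<c -> 0<d -> a*a = P0 -> c*c = P ->
  1/a + 1/c = 2/R0 -> 1/c + 1/d = 2/R -> 0 < R -> 0 < R0 ->
  (P/(2*c - R) + al^2*(2*c-R)/(2*P*R)) - (P0/(2*a - R0) + al^2*(2*a-R0)/(2*P0*R0))
  = (1/R0 - 1/R) * (/(4/(R*R0) - 2/c*(1/R+1/R0) + 1/P) - al^2/c).
Proof.
  intros Ha Hc Hd <- <- H0 H1 HR HR0.
  assert (ER : R = 2*c*d/(c+d)).
  { replace R with (2/(2/R)) by (field; lra). rewrite <- H1. field. lra. }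
  assert (ER0 : R0 = 2*a*c/(a+c)).
  { replace R0 with (2/(2/R0)) by (field; lra). rewrite <- H0. field. lra. }
  subst R R0.
  field; repeat split; nra.
Qed.

Lemma fin (U U0 Up U0p Q Qm Bc B1 B0 tau h rr : R) : 0 < tau -> 0 < h ->
  rr = - tau/2 * ((Up - U)/h + (U0p - U0)/h) ->
  U - U0 = tau * (Bc - (Q - Qm)/h) -> tau * Bc * (U + U0) = B1 - B0 ->
  ((U^2/2 - U0^2/2) + rr*Q - (B1 - B0)/2)/tau + ((Up+U0p)/2*Q - (U+U0)/2*Qm)/h = 0.
Proof.
  intros Ht Hh Hr HU HB. rewrite <- HB, Hr.
  replace (U^2/2 - U0^2/2) with ((U-U0)*(U+U0)/2) by field. rewrite HU. field. lra.
Qed.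

Theorem mainTheorem12 (tau h alpha : R) (b : R -> R) (rho p u x Bc : grid) :
  0 < tau -> 0 < h ->
  (forall n k, 0 < rho n k) -> (forall n k, 0 < p n k) ->
  (forall n k, Qbr rho p n k <> 0) ->
  schemeM tau h alpha rho p u x Bc ->
  ((exists c : R, forall y, b y = c) /\ (forall n k, Bc n k = 0))
  \/ ((forall n k, u n k + chk u n k <> 0) /\
      (forall n k, Bc n k = (b (hat x n k) - b (chk x n k)) / (tau * (u n k + chk u n k)))) ->
  forall n k : Z,
    d_tb tau (energy alpha b rho p u x) n k + d_sb h (eflux alpha rho p u) n k = 0.
Proof.
  intros Ht Hh Hr Hp HQ HM Hb n k.
  destruct (HM n k) as [E1 [E2 [E3 [E4 E5]]]].
  destruct (HM (n+1)%Z k) as [_ [_ [_ [_ F5]]]].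
  destruct (HM (n-1)%Z k) as [_ [_ [G3 _]]].
  unfold d_tb, d_sb, d_s, d_t, energy, eflux, Qf, Qbr in *.
  unfold chk, hat, splus, sminus in *.
  replace (n + 1 - 1)%Z with n in F5 by ring.
  replace (n - 1 + 1)%Z with n in * by ring.
  replace (k - 1 + 1)%Z with k by ring.
  set (Qm := / (4 / (rho n (k - 1)%Z * rho (n - 1)%Z (k - 1)%Z) -
     2 / sqrt (p n (k - 1)%Z) * (1 / rho n (k - 1)%Z + 1 / rho (n - 1)%Z (k - 1)%Z) + 1 / p n (k - 1)%Z) -
    alpha ^ 2 / sqrt (p n (k - 1)%Z)) in *.
  pose proof (Hr n k) as Rn. pose proof (Hr (n-1)%Z k) as Rn0.
  pose proof (Hp n k) as Pn. pose proof (Hp (n-1)%Z k) as Pn0. pose proof (Hp (n+1)%Z k) as Pn1.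
  assert (HK := key (sqrt (p (n-1)%Z k)) (sqrt (p n k)) (sqrt (p (n+1)%Z k))
    (p n k) (p (n-1)%Z k) (rho n k) (rho (n-1)%Z k) alpha
    (sqrt_lt_R0 _ Pn0) (sqrt_lt_R0 _ Pn) (sqrt_lt_R0 _ Pn1)
    (sqrt_sqrt _ (Rlt_le _ _ Pn0)) (sqrt_sqrt _ (Rlt_le _ _ Pn)) E5 F5 Rn Rn0).
  set (Q := / (4 / (rho n k * rho (n - 1)%Z k) - 2 / sqrt (p n k) * (1 / rho n k + 1 / rho (n - 1)%Z k) + 1 / p n k) - alpha ^ 2 / sqrt (p n k)) in *.
  set (A := p n k / (2 * sqrt (p n k) - rho n k) +
    alpha ^ 2 * (2 * sqrt (p n k) - rho n k) / (2 * p n k * rho n k)) in *.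
  set (A0 := p (n - 1)%Z k / (2 * sqrt (p (n - 1)%Z k) - rho (n - 1)%Z k) +
     alpha ^ 2 * (2 * sqrt (p (n - 1)%Z k) - rho (n - 1)%Z k) /
     (2 * p (n - 1)%Z k * rho (n - 1)%Z k)) in *.
  assert (H1 : 1 / rho (n-1)%Z k - 1 / rho n k =
     - tau / 2 * ((u n (k+1)%Z - u n k)/h + (u (n-1)%Z (k+1)%Z - u (n-1)%Z k)/h)).
  { set (S := (u n (k + 1)%Z - u n k) / h + (u (n - 1)%Z (k + 1)%Z - u (n - 1)%Z k) / h) in *.
    assert (rho n k - rho (n-1)%Z k = - tau * (1/2 * rho n k * rho (n-1)%Z k * S)).
    { apply (Rmult_eq_reg_r (/tau)); [|apply Rinv_neq_0_compat; lra].
      replace (- tau * (1 / 2 * rho n k * rho (n - 1)%Z k * S) * / tau)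
        with (- (1 / 2 * rho n k * rho (n - 1)%Z k * S)) by (field; lra).
      unfold Rdiv in E1 |- *. remember (1 * / 2 * rho n k * rho (n - 1)%Z k * S) as X. remember ((rho n k - rho (n - 1)%Z k) * / tau) as Y. lra. }
    replace (1 / rho (n - 1)%Z k - 1 / rho n k) with
      ((rho n k - rho (n-1)%Z k) / (rho n k * rho (n-1)%Z k)) by (field; lra).
    rewrite H. field. lra. }
  assert (HU : u n k - u (n-1)%Z k = tau * (Bc n k - (Q - Qm)/h)).
  { apply (Rmult_eq_reg_r (/tau)); [|apply Rinv_neq_0_compat; lra].
    replace (tau * (Bc n k - (Q - Qm) / h) * / tau) with (Bc n k - (Q - Qm) / h) by (field; lra).
    unfold Rdiv in E2 |- *. lra. }
  assert (HB : tau * Bc n k * (u n k + u (n-1)%Z k) = b (x (n+1)%Z k) - b (x (n-1)%Z k)).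
  { destruct Hb as [[[c Hc] HB0] | [Hne HB1]].
    - rewrite HB0, !Hc. ring.
    - rewrite HB1. field. split; [apply Hne | lra]. }
  rewrite <- (fin (u n k) (u (n-1)%Z k) (u n (k+1)%Z) (u (n-1)%Z (k+1)%Z) Q Qm (Bc n k)
     (b (x (n+1)%Z k)) (b (x (n-1)%Z k)) tau h _ Ht Hh H1 HU HB).
  rewrite <- HK. apply (f_equal2 Rplus); [|reflexivity]. unfold Rdiv. apply (f_equal2 Rmult); [|reflexivity]. unfold A, A0. lra.
Qed.
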